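(* For every real $\lambda$ and $n\in\{0,2\}$, define $$I_n(\lambda)=\int_0^\infty \frac{\operatorname{erfc}\big(\sqrt{s^2+\lambda^2}\big)}{\sqrt{s^2+\lambda^2}}\,s^{n+1}\,ds,\qquad K_n(\lambda)=\int_0^\infty \frac{\phi_3\big(\sqrt{s^2+\lambda^2}\big)}{(s^2+\lambda^2)^{5/2}}\,s^{n+5}\,ds,$$ where $\phi_3(t)=1-s_3(t)$ and $s_3(t)=\operatorname{erf}(t)-\frac{2}{\sqrt\pi}\big(\frac23 t^3+t\big)e^{-t^2}$. Then $$K_0=\tfrac83\,I_0,\qquad K_2=8\,I_2$$ as functions of $\lambda$.
   Context: $\operatorname{erf}(r)=\frac{2}{\sqrt\pi}\int_0^r e^{-s^2}\,ds$ and $\operatorname{erfc}=1-\operatorname{erf}$. *)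

(* Defs.v *)
From Stdlib Require Import Reals.
From Coquelicot Require Import Coquelicot.
Open Scope R_scope.

Definition erf (r : R) : R := 2 / sqrt PI * RInt (fun s => exp (- s ^ 2)) 0 r.
Definition erfc (r : R) : R := 1 - erf r.

Definition s3 (t : R) : R := erf t - 2 / sqrt PI * (2 / 3 * t ^ 3 + t) * exp (- t ^ 2).
Definition phi3 (t : R) : R := 1 - s3 t.

Definition int0inf (f : R -> R) : R := RInt_gen f (at_point 0) (Rbar_locally p_infty).

Definition I_n (n : nat) (lam : R) : R :=
  int0inf (fun s => erfc (sqrt (s ^ 2 + lam ^ 2)) / sqrt (s ^ 2 + lam ^ 2) * s ^ (n + 1)).

(* K_n(lam) = int_0^oo phi3(sqrt(s^2+lam^2)) / (s^2+lam^2)^(5/2) * s^(n+5) ds,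
   with (s^2+lam^2)^(5/2) written as sqrt(s^2+lam^2)^5 *)
Definition K_n (n : nat) (lam : R) : R :=
  int0inf (fun s => phi3 (sqrt (s ^ 2 + lam ^ 2)) / sqrt (s ^ 2 + lam ^ 2) ^ 5 * s ^ (n + 5)).

(* Main.v *)
Require Import Defs.
From Stdlib Require Import Reals Lra Psatz.
From Coquelicot Require Import Coquelicot.
Open Scope R_scope.

Lemma exd_cont (f : R -> R) x : ex_derive f x -> continuous f x.
Proof. intros H. exact (@ex_derive_continuous R_AbsRing R_NormedModule f x H). Qed.

Lemma is_derive_eqv (f : R -> R) x l1 l2 : is_derive f x l1 -> l1 = l2 -> is_derive f x l2.
Proof. intros H E; subst; exact H. Qed.

Definition gf (s : R) := exp (- s ^ 2).
Definition G (x : R) := RInt gf 0 x.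

Lemma gf_cont x : continuous gf x.
Proof. apply exd_cont. unfold gf. auto_derive. auto. Qed.

Lemma ex_RInt_gf a b : ex_RInt gf a b.
Proof. apply (@ex_RInt_continuous R_CompleteNormedModule). intros; apply gf_cont. Qed.

Lemma is_derive_G x : is_derive G x (gf x).
Proof.
  apply is_derive_RInt with 0.
  - apply filter_forall. intros y. apply (@RInt_correct R_CompleteNormedModule), ex_RInt_gf.
  - apply gf_cont.
Qed.

Lemma G0 : G 0 = 0.
Proof. unfold G. rewrite RInt_point. reflexivity. Qed.

Definition f2 (x t : R) := exp (- (x ^ 2 * (1 + t ^ 2))) / (1 + t ^ 2).

Lemma f2_der x t : is_derive (fun u => f2 u t) x (- 2 * x * exp (- (x ^ 2 * (1 + t ^ 2)))).
Proof.
  unfold f2. auto_derive. easy. cbn [pow].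
  field. nra.
Qed.

Lemma f2_cont_t x t : continuous (fun t => f2 x t) t.
Proof. apply exd_cont. unfold f2. auto_derive. nra. Qed.

Lemma ex_RInt_f2 x a b : ex_RInt (fun t => f2 x t) a b.
Proof. apply (@ex_RInt_continuous R_CompleteNormedModule). intros; apply f2_cont_t. Qed.

Lemma cont_exp_pt y : continuity_pt exp y.
Proof. apply derivable_continuous_pt, derivable_pt_exp. Qed.

Lemma f2_der_cont x t :
  continuity_2d_pt (fun u v => Derive (fun z => f2 z v) u) x t.
Proof.
  apply continuity_2d_pt_ext with
      (fun u v => (-2 * u) * exp (- (u * u * (1 + v * v)))).
  { intros u v. symmetry. apply is_derive_unique.
    replace (-2 * u * exp (- (u * u * (1 + v * v)))) with (- 2 * u * exp (- (u ^ 2 * (1 + v ^ 2)))).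
    apply f2_der. cbn [pow]. f_equal. f_equal. f_equal. ring. }
  apply continuity_2d_pt_mult.
  - apply continuity_2d_pt_mult. apply continuity_2d_pt_const. apply continuity_2d_pt_id1.
  - apply (continuity_1d_2d_pt_comp exp (fun u v => - (u * u * (1 + v * v)))).
    + apply cont_exp_pt.
    + apply continuity_2d_pt_opp. apply continuity_2d_pt_mult.
      apply continuity_2d_pt_mult; apply continuity_2d_pt_id1.
      apply continuity_2d_pt_plus. apply continuity_2d_pt_const.
      apply continuity_2d_pt_mult; apply continuity_2d_pt_id2.
Qed.

Definition hh (x : R) := G x ^ 2 + RInt (fun t => f2 x t) 0 1.

Lemma inner_eq x :
  RInt (fun t => Derive (fun u => f2 u t) x) 0 1 = - 2 * gf x * G x.
Proof.
  rewrite (RInt_ext _ (fun t => scal (-2 * gf x) (scal x (gf (x * t + 0))))).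
  2:{ intros t _. transitivity (- 2 * x * exp (- (x ^ 2 * (1 + t ^ 2)))).
      apply is_derive_unique, f2_der.
      replace (exp (- (x ^ 2 * (1 + t ^ 2)))) with (exp (- x ^ 2) * exp (- (x * t + 0) ^ 2))
        by (rewrite <- exp_plus; f_equal; ring).
      unfold scal; simpl; unfold mult; simpl. unfold gf. simpl. ring. }
  apply is_RInt_unique. apply (@is_RInt_scal R_NormedModule).
  apply (@is_RInt_comp_lin R_NormedModule).
  replace (x * 0 + 0) with 0 by ring. replace (x * 1 + 0) with x by ring.
  apply (@RInt_correct R_CompleteNormedModule), ex_RInt_gf.
Qed.

Lemma hh_der x : is_derive hh x 0.
Proof.
  assert (d1 := is_derive_pow G 2 x _ (is_derive_G x)).
  assert (d2 : is_derive (fun y => RInt (fun t => f2 y t) 0 1) x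
                 (RInt (fun t => Derive (fun u => f2 u t) x) 0 1)).
  { apply is_derive_RInt_param.
    - apply filter_forall. intros y t _. eexists. apply f2_der.
    - intros t _. apply f2_der_cont.
    - apply filter_forall. intros y. apply ex_RInt_f2. }
  rewrite inner_eq in d2.
  assert (D := is_derive_plus _ _ x _ _ d1 d2).
  eapply is_derive_eqv. exact D. unfold plus; simpl. ring.
Qed.

Lemma hh_const x : hh x = hh 0.
Proof.
  assert (H1 : is_RInt (fun _ => 0) 0 x (minus (hh x) (hh 0))).
  { apply (@is_RInt_derive R_CompleteNormedModule).
    - intros; apply hh_der.
    - intros; apply (@continuous_const R_UniformSpace R_UniformSpace). }
  assert (H2 := @is_RInt_const R_NormedModule 0 x 0).
  apply (@is_RInt_unique R_CompleteNormedModule) in H1. apply (@is_RInt_unique R_CompleteNormedModule) in H2.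
  rewrite H1 in H2. unfold minus, plus, opp, scal in H2; simpl in H2. unfold mult in H2; simpl in H2.
  lra.
Qed.

Lemma hh0 : hh 0 = PI / 4.
Proof.
  unfold hh. rewrite G0.
  assert (H : is_RInt (fun t => f2 0 t) 0 1 (minus (atan 1) (atan 0))).
  { apply (@is_RInt_derive R_CompleteNormedModule).
    - intros t _. replace (f2 0 t) with (/ (1 + t²)). apply is_derive_atan.
      unfold f2, Rsqr. simpl. replace (- (0 * (0 * 1) * (1 + t * (t * 1)))) with 0 by ring. rewrite exp_0. field.
      nra.
    - intros; apply f2_cont_t. }
  apply (@is_RInt_unique R_CompleteNormedModule) in H. rewrite H. rewrite atan_1, atan_0.
  unfold minus, plus, opp; simpl. ring.
Qed.

Lemma f2_le x t : 0 <= f2 x t <= exp (- x ^ 2).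
Proof.
  unfold f2, Rdiv.
  assert (0 < / (1 + t ^ 2)) by (apply Rinv_0_lt_compat; nra).
  assert (/ (1 + t ^ 2) <= 1) by (rewrite <- Rinv_1; apply Rinv_le_contravar; nra).
  assert (exp (- (x ^ 2 * (1 + t ^ 2))) <= exp (- x ^ 2)).
  { destruct (Req_dec (- (x ^ 2 * (1 + t ^ 2))) (- x ^ 2)) as [E|E].
    rewrite E; lra. left; apply exp_increasing. nra. }
  assert (0 < exp (- (x ^ 2 * (1 + t ^ 2)))) by apply exp_pos.
  split; nra.
Qed.

Lemma RInt_f2_le x : 0 <= RInt (fun t => f2 x t) 0 1 <= exp (- x ^ 2).
Proof.
  split.
  - apply RInt_ge_0. lra. apply ex_RInt_f2. intros; apply f2_le.
  - replace (exp (- x ^ 2)) with (RInt (fun _ => exp (- x ^ 2)) 0 1).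
    apply RInt_le. lra. apply ex_RInt_f2. apply (@ex_RInt_const R_NormedModule).
    intros; apply f2_le.
    rewrite RInt_const. unfold scal; simpl; unfold mult; simpl. ring.
Qed.

Lemma exp_pow y n : exp y ^ n = exp (INR n * y).
Proof.
  induction n. simpl. rewrite Rmult_0_l, exp_0. reflexivity.
  rewrite S_INR. simpl pow. rewrite IHn. rewrite <- exp_plus. f_equal. ring.
Qed.

Lemma exp_ge_pow y m : 0 <= y -> (y / INR (S m)) ^ (S m) <= exp y.
Proof.
  intros Hy.
  assert (Hm : 0 < INR (S m)) by (apply lt_0_INR; lia).
  replace y with (INR (S m) * (y / INR (S m))) at 2 by (field; lra).
  rewrite <- exp_pow. apply pow_incr. split.
  apply Rdiv_le_0_compat; lra.
  assert (H := exp_ineq1_le (y / INR (S m))).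
  assert (0 <= y / INR (S m)) by (apply Rdiv_le_0_compat; lra). lra.
Qed.

Lemma decay_bound k r : 1 <= r ->
  0 <= r ^ k * exp (- r ^ 2) <= (INR (S (S k))) ^ (S (S k)) / r.
Proof.
  intros Hr. set (m := S (S k)).
  assert (Hm : 0 < INR m) by (apply lt_0_INR; unfold m; lia).
  assert (E := exp_ge_pow (r ^ 2) (S k) ltac:(nra)). fold m in E.
  assert (P1 : 0 < r ^ k) by (apply pow_lt; lra).
  assert (P2 : 0 < exp (- r ^ 2)) by apply exp_pos.
  split. nra.
  rewrite exp_Ropp.
  assert (Q : 0 < (r ^ 2 / INR m) ^ m) by (apply pow_lt; apply Rdiv_lt_0_compat; nra).
  apply Rle_trans with (r ^ k * / ((r ^ 2 / INR m) ^ m)).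
  { apply Rmult_le_compat_l. lra. apply Rinv_le_contravar; lra. }
  replace ((r ^ 2 / INR m) ^ m) with (r ^ k * (r ^ (k + 4)) / INR m ^ m).
  2:{ unfold Rdiv. rewrite Rpow_mult_distr, <- pow_mult, pow_inv.
      rewrite <- pow_add. f_equal. f_equal. unfold m. lia. }
  assert (R1 : 0 < r ^ (k + 4)) by (apply pow_lt; lra).
  assert (R2 : r <= r ^ (k + 4)).
  { replace (k + 4)%nat with (S (k + 3)) by lia. simpl pow.
    assert (1 <= r ^ (k + 3)) by (apply pow_R1_Rle; lra). nra. }
  assert (M1 : 0 < INR m ^ m) by (apply pow_lt; lra).
  replace (r ^ k * / (r ^ k * r ^ (k + 4) / INR m ^ m)) with (INR m ^ m / r ^ (k + 4))
    by (field; lra).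
  unfold Rdiv. apply Rmult_le_compat_l. lra. apply Rinv_le_contravar; lra.
Qed.

Lemma is_lim_inv_p : is_lim (fun r => / r) p_infty 0.
Proof.
  replace (Finite 0) with (Rbar_inv p_infty) by reflexivity.
  apply is_lim_inv. apply is_lim_id. discriminate.
Qed.

Lemma decay k : is_lim (fun r => r ^ k * exp (- r ^ 2)) p_infty 0.
Proof.
  apply is_lim_le_le_loc with (fun _ => 0) (fun r => INR (S (S k)) ^ S (S k) * / r).
  - exists 1. intros r Hr. apply decay_bound. lra.
  - apply is_lim_const.
  - replace (Finite 0) with (Rbar_mult (INR (S (S k)) ^ S (S k)) 0)
      by (simpl; f_equal; ring).
    apply is_lim_scal_l. apply is_lim_inv_p.
Qed.

Lemma hh_lim : is_lim (fun x => G x ^ 2) p_infty (PI / 4).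
Proof.
  apply is_lim_le_le_loc with (fun x => PI / 4 - exp (- x ^ 2)) (fun _ => PI / 4).
  - exists 0. intros x _. assert (H := hh_const x). rewrite hh0 in H. unfold hh in H.
    assert (B := RInt_f2_le x). lra.
  - replace (Finite (PI / 4)) with (Finite (PI / 4 + - 0)) by (f_equal; ring).
    apply is_lim_plus'. apply is_lim_const.
    replace (Finite (- 0)) with (Rbar_mult (-1) 0) by (simpl; f_equal; ring).
    apply is_lim_ext with (fun x => -1 * (x ^ 0 * exp (- x ^ 2))).
    intros; simpl; ring.
    apply is_lim_scal_l, decay.
  - apply is_lim_const.
Qed.

Lemma G_ge0 x : 0 <= x -> 0 <= G x.
Proof.
  intros Hx. apply RInt_ge_0. lra. apply ex_RInt_gf. intros; unfold gf; left; apply exp_pos.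
Qed.

Lemma G_lim : is_lim G p_infty (sqrt PI / 2).
Proof.
  apply is_lim_ext_loc with (fun x => sqrt (G x ^ 2)).
  { exists 0. intros x Hx. rewrite <- Rsqr_pow2. apply sqrt_Rsqr. apply G_ge0; lra. }
  assert (E : sqrt PI / 2 = sqrt (PI / 4)).
  { rewrite sqrt_div_alt by lra. replace 4 with (2 * 2) by ring. rewrite sqrt_square by lra.
    reflexivity. }
  rewrite E.
  unfold is_lim. apply (filterlim_comp _ _ _ (fun x => G x ^ 2) sqrt _ (locally (PI/4))).
  apply hh_lim.
  apply continuity_pt_filterlim. apply continuity_pt_sqrt.
  assert (PI_RGT_0 := PI_RGT_0). lra.
Qed.

Lemma erf_G x : erf x = 2 / sqrt PI * G x.
Proof. reflexivity. Qed.

Lemma erf_lim : is_lim erf p_infty 1.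
Proof.
  apply is_lim_ext with (fun x => 2 / sqrt PI * G x). intros; reflexivity.
  replace (Finite 1) with (Rbar_mult (2 / sqrt PI) (sqrt PI / 2)).
  apply is_lim_scal_l, G_lim.
  simpl. f_equal. assert (0 < sqrt PI) by (apply sqrt_lt_R0, PI_RGT_0). field. lra.
Qed.

Definition cc := 2 / sqrt PI.

Lemma sqrtPI_pos : 0 < sqrt PI.
Proof. apply sqrt_lt_R0, PI_RGT_0. Qed.

Lemma erf_der x : is_derive erf x (cc * exp (- x ^ 2)).
Proof.
  apply (is_derive_ext (fun x => 2 / sqrt PI * G x)). intros; reflexivity.
  apply is_derive_scal, is_derive_G.
Qed.

Lemma ex_derive_erf x : ex_derive (fun y => erf y) x.
Proof. eexists. apply erf_der. Qed.

Lemma Derive_erf x : Derive (fun y => erf y) x = cc * exp (- x ^ 2).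
Proof. apply is_derive_unique, erf_der. Qed.

Lemma erf_diff r y : 0 < r <= y -> 0 <= erf y - erf r <= cc * (exp (- r ^ 2) / (2 * r)).
Proof.
  intros [Hr Hy].
  assert (E : erf y - erf r = cc * RInt gf r y).
  { rewrite !erf_G. unfold G. rewrite <- (RInt_Chasles gf 0 r y) by apply ex_RInt_gf.
    unfold cc, plus; simpl. ring. }
  rewrite E.
  assert (Hc : 0 < cc) by (unfold cc; apply Rdiv_lt_0_compat; [lra| apply sqrtPI_pos]).
  assert (B : 0 <= RInt gf r y <= exp (- r ^ 2) / (2 * r)).
  { split.
    - apply RInt_ge_0. lra. apply ex_RInt_gf. intros; unfold gf; left; apply exp_pos.
    - assert (I : is_RInt (fun t => t / r * gf t) r y
                    (minus (- exp (- y ^ 2) / (2 * r)) (- exp (- r ^ 2) / (2 * r)))).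
      { apply (@is_RInt_derive R_CompleteNormedModule (fun t => - exp (- t ^ 2) / (2 * r))).
        - intros t _. unfold gf. auto_derive. lra. cbn [pow]. field. lra.
        - intros t _. apply exd_cont. unfold gf. auto_derive. lra. }
      apply (@is_RInt_unique R_CompleteNormedModule) in I.
      apply Rle_trans with (RInt (fun t => t / r * gf t) r y).
      + apply RInt_le. lra. apply ex_RInt_gf.
        apply (@ex_RInt_continuous R_CompleteNormedModule). intros. apply exd_cont.
        unfold gf. auto_derive. lra.
        intros t Ht. unfold gf. assert (0 < exp (- t ^ 2)) by apply exp_pos.
        assert (1 <= t / r). { apply (Rmult_le_reg_r r). lra. unfold Rdiv. rewrite Rmult_assoc, Rinv_l by lra. lra. }
        nra.
      + rewrite I. replace (minus (- exp (- y ^ 2) / (2 * r)) (- exp (- r ^ 2) / (2 * r)))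
          with ((exp (- r ^ 2) - exp (- y ^ 2)) * / (2 * r))
          by (unfold minus, plus, opp; simpl; field; lra).
        assert (0 < exp (- y ^ 2)) by apply exp_pos.
        unfold Rdiv. apply Rmult_le_compat_r. left; apply Rinv_0_lt_compat; lra. lra. }
  split. nra. apply Rmult_le_compat_l; lra.
Qed.

Lemma erfc_bound r : 0 < r -> 0 <= erfc r <= cc * (exp (- r ^ 2) / (2 * r)).
Proof.
  intros Hr.
  assert (L : is_lim (fun y => erf y + - erf r) p_infty (1 + - erf r)).
  { apply is_lim_plus'. apply erf_lim. apply is_lim_const. }
  unfold erfc. split.
  - assert (Hl : Rbar_locally' p_infty (fun y => 0 <= erf y + - erf r)).
    { exists r; intros y Hy; assert (D := erf_diff r y ltac:(lra)); lra. }
    assert (H := is_lim_le_loc (fun _ => 0) (fun y => erf y + - erf r) p_infty 0 _ Hl (is_lim_const 0 p_infty) L).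
    simpl in H. lra.
  - assert (Hl : Rbar_locally' p_infty (fun y => erf y + - erf r <= cc * (exp (- r ^ 2) / (2 * r)))).
    { exists r; intros y Hy; assert (D := erf_diff r y ltac:(lra)); lra. }
    assert (H := is_lim_le_loc (fun y => erf y + - erf r) (fun _ => cc * (exp (- r ^ 2) / (2 * r))) p_infty _ _ Hl L (is_lim_const _ p_infty)).
    simpl in H. cbn [pow]. lra.
Qed.

Definition V (f : R -> R) := is_lim f p_infty 0.

Lemma V_plus f g : V f -> V g -> V (fun r => f r + g r).
Proof.
  intros A B. unfold V. replace (Finite 0) with (Finite (0 + 0)) by (f_equal; ring).
  apply is_lim_plus'; assumption.
Qed.

Lemma V_scal a f : V f -> V (fun r => a * f r).
Proof.
  intros A. unfold V. replace (Finite 0) with (Rbar_mult a 0) by (simpl; f_equal; ring).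
  apply is_lim_scal_l; assumption.
Qed.

Lemma V_sq f g : (exists M, forall r, M < r -> Rabs (f r) <= g r) -> V g -> V f.
Proof.
  intros [M HM] Vg. unfold V.
  apply is_lim_le_le_loc with (fun r => - g r) g.
  - exists M. intros r Hr. specialize (HM r Hr). apply Rabs_le_between in HM. lra.
  - replace (Finite 0) with (Rbar_mult (-1) 0) by (simpl; f_equal; ring).
    apply is_lim_ext with (fun r => -1 * g r). intros; ring.
    apply is_lim_scal_l; assumption.
  - assumption.
Qed.

Lemma V_exp k : V (fun r => r ^ k * exp (- r ^ 2)).
Proof. apply decay. Qed.

Lemma V_erfc0 : V erfc.
Proof.
  unfold V, erfc. replace (Finite 0) with (Finite (1 + - 1)) by (f_equal; ring).
  apply is_lim_ext with (fun r => 1 + - erf r). intros; ring.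
  apply is_lim_plus'. apply is_lim_const.
  replace (Finite (- 1)) with (Rbar_mult (-1) 1) by (simpl; f_equal; ring).
  apply is_lim_ext with (fun r => -1 * erf r). intros; ring.
  apply is_lim_scal_l, erf_lim.
Qed.

Lemma V_erfc_pow k : V (fun r => erfc r * r ^ k).
Proof.
  destruct k.
  - apply (V_sq _ erfc). exists 0. intros r Hr. simpl. rewrite Rmult_1_r.
    rewrite Rabs_pos_eq. lra. apply erfc_bound; lra. apply V_erfc0.
  - apply (V_sq _ (fun r => cc / 2 * (r ^ k * exp (- r ^ 2)))).
    + exists 0. intros r Hr. destruct (erfc_bound r Hr) as [B1 B2].
      assert (P : 0 < r ^ S k) by (apply pow_lt; lra).
      rewrite Rabs_pos_eq by nra.
      apply Rle_trans with (cc * (exp (- r ^ 2) / (2 * r)) * r ^ S k).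
      apply Rmult_le_compat_r; lra.
      right. simpl. field. lra.
    + apply V_scal, V_exp.
Qed.

Lemma V_erfc_inv k : V (fun r => erfc r * / r ^ k).
Proof.
  apply (V_sq _ erfc). exists 1. intros r Hr.
  destruct (erfc_bound r ltac:(lra)) as [B1 B2].
  assert (P : 1 <= r ^ k) by (apply pow_R1_Rle; lra).
  assert (Q : 0 < / r ^ k <= 1).
  { split. apply Rinv_0_lt_compat; lra. rewrite <- Rinv_1. apply Rinv_le_contravar; lra. }
  rewrite Rabs_pos_eq by nra. nra.
  apply V_erfc0.
Qed.

Lemma V_exp_inv k : V (fun r => exp (- r ^ 2) * / r ^ k).
Proof.
  apply (V_sq _ (fun r => r ^ 0 * exp (- r ^ 2))). exists 1. intros r Hr.
  assert (B1 : 0 < exp (- r ^ 2)) by apply exp_pos.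
  assert (P : 1 <= r ^ k) by (apply pow_R1_Rle; lra).
  assert (Q : 0 < / r ^ k <= 1).
  { split. apply Rinv_0_lt_compat; lra. rewrite <- Rinv_1. apply Rinv_le_contravar; lra. }
  rewrite Rabs_pos_eq by nra. rewrite pow_O. nra.
  apply V_exp.
Qed.

Definition J0 r := erfc r * r ^ 1 + (- cc / 2) * (r ^ 0 * exp (- r ^ 2)).
Definition J2 a2 r := 1/3 * (erfc r * r ^ 3) + (- a2) * (erfc r * r ^ 1)
  + cc * (-1/6) * (r ^ 2 * exp (- r ^ 2)) + cc * (a2/2 - 1/6) * (r ^ 0 * exp (- r ^ 2)).
Definition H0 a2 r := -5/3 * (erfc r * r ^ 1) + 2 * a2 * (erfc r * / r ^ 1)
  + (- a2 ^ 2 / 3) * (erfc r * / r ^ 3) + cc * (-1/3) * (r ^ 2 * exp (- r ^ 2))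
  + cc * (2 * a2 / 3) * (r ^ 0 * exp (- r ^ 2)) + cc * (- a2 ^ 2 / 3) * (exp (- r ^ 2) * / r ^ 2).
Definition H2 a2 r := -7/3 * (erfc r * r ^ 3) + 5 * a2 * (erfc r * r ^ 1)
  + (-3 * a2 ^ 2) * (erfc r * / r ^ 1) + a2 ^ 3 / 3 * (erfc r * / r ^ 3)
  + cc * (-1/3) * (r ^ 4 * exp (- r ^ 2)) + cc * a2 * (r ^ 2 * exp (- r ^ 2))
  + cc * (- a2 ^ 2) * (r ^ 0 * exp (- r ^ 2)) + cc * (a2 ^ 3 / 3) * (exp (- r ^ 2) * / r ^ 2).
Definition FK0 a2 r := H0 a2 r + 8/3 * J0 r.
Definition FK2 a2 r := H2 a2 r + 8 * J2 a2 r.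
Definition FK0z r := -5/3 * (erfc r * r ^ 1) + cc * (-1/3) * (r ^ 2 * exp (- r ^ 2)) + 8/3 * J0 r.
Definition FK2z r := -7/3 * (erfc r * r ^ 3) + cc * (-1/3) * (r ^ 4 * exp (- r ^ 2)) + 8 * J2 0 r.

Ltac side := repeat split; try apply ex_derive_erf; try assumption;
  try (apply Rgt_not_eq, Rlt_gt, sqrt_lt_R0; nra); try nra;
  try (apply Rgt_not_eq, Rlt_gt; repeat apply Rmult_lt_0_compat; try apply sqrt_lt_R0; nra).

Lemma dJ0 a2 s : 0 < a2 ->
  is_derive (fun s => J0 (sqrt (s ^ 2 + a2))) s
    (erfc (sqrt (s ^ 2 + a2)) / sqrt (s ^ 2 + a2) * s ^ (0 + 1)).
Proof.
  intros Ha. unfold J0, erfc, cc. auto_derive. side.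
  rewrite Derive_erf. unfold cc. cbn [pow Nat.add].
  assert (Hr : 0 < sqrt (s * (s * 1) + a2)) by (apply sqrt_lt_R0; nra).
  assert (Hr2 := sqrt_sqrt (s * (s * 1) + a2) ltac:(nra)).
  set (r := sqrt (s * (s * 1) + a2)) in *. clearbody r.
  assert (E : a2 = r * r - s * s) by nra. subst a2.
  assert (Hp := sqrtPI_pos).
  field. lra.
Qed.

Ltac fin := rewrite ?Derive_erf; unfold cc; cbn [pow Nat.add].

Ltac finr s a2 :=
  let Hr := fresh in let Hr2 := fresh in
  assert (Hr : 0 < sqrt (s * (s * 1) + a2)) by (apply sqrt_lt_R0; nra);
  assert (Hr2 := sqrt_sqrt (s * (s * 1) + a2) ltac:(nra));
  set (r := sqrt (s * (s * 1) + a2)) in *; clearbody r;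
  assert (E : a2 = r * r - s * s) by nra; subst a2;
  assert (Hp := sqrtPI_pos);
  field; lra.

Lemma dJ2 a2 s : 0 < a2 ->
  is_derive (fun s => J2 a2 (sqrt (s ^ 2 + a2))) s
    (erfc (sqrt (s ^ 2 + a2)) / sqrt (s ^ 2 + a2) * s ^ (2 + 1)).
Proof.
  intros Ha. unfold J2, erfc, cc. auto_derive. side. fin. finr s a2.
Qed.

Lemma dFK0 a2 s : 0 < a2 ->
  is_derive (fun s => FK0 a2 (sqrt (s ^ 2 + a2))) s
    (phi3 (sqrt (s ^ 2 + a2)) / sqrt (s ^ 2 + a2) ^ 5 * s ^ (0 + 5)).
Proof.
  intros Ha. unfold FK0, H0, J0, phi3, s3, erfc, cc. auto_derive. side. fin. finr s a2.
Qed.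

Lemma dFK2 a2 s : 0 < a2 ->
  is_derive (fun s => FK2 a2 (sqrt (s ^ 2 + a2))) s
    (phi3 (sqrt (s ^ 2 + a2)) / sqrt (s ^ 2 + a2) ^ 5 * s ^ (2 + 5)).
Proof.
  intros Ha. unfold FK2, H2, J2, phi3, s3, erfc, cc. auto_derive. side. fin. finr s a2.
Qed.

Lemma dJ0z s : is_derive J0 s (erfc s).
Proof.
  unfold J0, erfc, cc. auto_derive. side. fin. assert (Hp := sqrtPI_pos). field. lra.
Qed.

Lemma dJ2z s : is_derive (J2 0) s (erfc s * s ^ 2).
Proof.
  unfold J2, erfc, cc. auto_derive. side. fin. assert (Hp := sqrtPI_pos). field. lra.
Qed.

Lemma dFK0z s : is_derive FK0z s (phi3 s).
Proof.
  unfold FK0z, J0, phi3, s3, erfc, cc. auto_derive. side. fin. assert (Hp := sqrtPI_pos). field. lra.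
Qed.

Lemma dFK2z s : is_derive FK2z s (phi3 s * s ^ 2).
Proof.
  unfold FK2z, J2, phi3, s3, erfc, cc. auto_derive. side. fin. assert (Hp := sqrtPI_pos). field. lra.
Qed.

Lemma ftc (f F dF : R -> R) :
  (forall x, is_derive F x (dF x)) -> (forall x, continuous dF x) ->
  (forall x, 0 < x -> dF x = f x) -> V F ->
  is_RInt_gen f (at_point 0) (Rbar_locally p_infty) (0 - F 0).
Proof.
  intros Hd Hc He HV.
  assert (DF : forall x, Derive F x = dF x) by (intros; apply is_derive_unique, Hd).
  apply (is_RInt_gen_ext (Derive F)).
  { apply (Filter_prod _ _ _ (fun a => a = 0) (fun b => 0 < b)).
    - reflexivity.
    - exists 0. intros; assumption.
    - intros a b -> Hb x Hx. simpl in Hx. rewrite Rmin_left in Hx by lra.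
      rewrite DF. apply He. lra. }
  apply is_RInt_gen_Derive.
  - apply (Filter_prod _ _ _ (fun a => a = 0) (fun b => 0 < b)).
    reflexivity. exists 0; intros; assumption.
    intros; eexists; apply Hd.
  - apply (Filter_prod _ _ _ (fun a => a = 0) (fun b => 0 < b)).
    reflexivity. exists 0; intros; assumption.
    intros a b _ _ x _. apply (continuous_ext dF). intros; symmetry; apply DF. apply Hc.
  - intros P HP. unfold at_point. exact (locally_singleton _ _ HP).
  - exact HV.
Qed.

Lemma V_comp (Phi : R -> R) a2 : 0 <= a2 -> V Phi -> V (fun s => Phi (sqrt (s ^ 2 + a2))).
Proof.
  intros Ha HV. unfold V.
  apply (is_lim_comp Phi (fun s => sqrt (s ^ 2 + a2)) p_infty 0 p_infty).
  - exact HV.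
  - apply (is_lim_le_p_loc (fun s => s)). exists 0. intros s Hs.
    apply Rle_trans with (sqrt (s ^ 2)). rewrite sqrt_pow2; lra. apply sqrt_le_1_alt. nra.
    apply is_lim_id.
  - exists 0. intros; discriminate.
Qed.

Ltac vtac := repeat (apply V_plus || apply V_erfc_pow || apply V_erfc_inv || apply V_exp
  || apply V_exp_inv || apply V_scal).

Lemma V_J0 : V (fun r => J0 r). Proof. unfold J0. vtac. Qed.
Lemma V_J2 a2 : V (fun r => J2 a2 r). Proof. unfold J2. vtac. Qed.
Lemma V_FK0 a2 : V (fun r => FK0 a2 r). Proof. unfold FK0, H0, J0. vtac. Qed.
Lemma V_FK2 a2 : V (fun r => FK2 a2 r). Proof. unfold FK2, H2, J2. vtac. Qed.
Lemma V_FK0z : V (fun r => FK0z r). Proof. unfold FK0z, J0. vtac. Qed.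
Lemma V_FK2z : V (fun r => FK2z r). Proof. unfold FK2z, J2. vtac. Qed.

Lemma H0_zero a2 r : 0 < r -> r ^ 2 = a2 -> H0 a2 r = 0.
Proof. intros Hr <-. unfold H0. field. lra. Qed.
Lemma H2_zero a2 r : 0 < r -> r ^ 2 = a2 -> H2 a2 r = 0.
Proof. intros Hr <-. unfold H2. field. lra. Qed.

Ltac ctac := intros; apply exd_cont; unfold phi3, s3, erfc; auto_derive; side.

Lemma sq0 x : 0 < x -> sqrt (x ^ 2 + 0 ^ 2) = x.
Proof. intros. replace (x ^ 2 + 0 ^ 2) with (x ^ 2) by ring. apply sqrt_pow2; lra. Qed.

Definition gI (n : nat) (lam : R) :=
  fun s => erfc (sqrt (s ^ 2 + lam ^ 2)) / sqrt (s ^ 2 + lam ^ 2) * s ^ (n + 1).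
Definition gK (n : nat) (lam : R) :=
  fun s => phi3 (sqrt (s ^ 2 + lam ^ 2)) / sqrt (s ^ 2 + lam ^ 2) ^ 5 * s ^ (n + 5).

Lemma IK0z : is_RInt_gen (gK 0 0) (at_point 0) (Rbar_locally p_infty) (0 - FK0z 0).
Proof.
  apply (ftc _ FK0z (fun s => phi3 s)). exact dFK0z. ctac.
  intros x Hx; unfold gK; rewrite sq0 by lra; simpl; field; lra. exact V_FK0z.
Qed.
Lemma II0z : is_RInt_gen (gI 0 0) (at_point 0) (Rbar_locally p_infty) (0 - J0 0).
Proof.
  apply (ftc _ J0 (fun s => erfc s)). exact dJ0z. ctac.
  intros x Hx; unfold gI; rewrite sq0 by lra; simpl; field; lra. exact V_J0.
Qed.
Lemma IK2z : is_RInt_gen (gK 2 0) (at_point 0) (Rbar_locally p_infty) (0 - FK2z 0).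
Proof.
  apply (ftc _ FK2z (fun s => phi3 s * s ^ 2)). exact dFK2z. ctac.
  intros x Hx; unfold gK; rewrite sq0 by lra; simpl; field; lra. exact V_FK2z.
Qed.
Lemma II2z : is_RInt_gen (gI 2 0) (at_point 0) (Rbar_locally p_infty) (0 - J2 0 0).
Proof.
  apply (ftc _ (J2 0) (fun s => erfc s * s ^ 2)). exact dJ2z. ctac.
  intros x Hx; unfold gI; rewrite sq0 by lra; simpl; field; lra. exact (V_J2 0).
Qed.

Lemma IK0 lam : 0 < lam ^ 2 -> is_RInt_gen (gK 0 lam) (at_point 0) (Rbar_locally p_infty)
  (0 - FK0 (lam ^ 2) (sqrt (0 ^ 2 + lam ^ 2))).
Proof.
  intros Ha. apply (ftc _ (fun s => FK0 (lam ^ 2) (sqrt (s ^ 2 + lam ^ 2))) (gK 0 lam)).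
  intros; apply dFK0; exact Ha. unfold gK; ctac. intros; reflexivity.
  apply V_comp. lra. apply V_FK0.
Qed.
Lemma II0 lam : 0 < lam ^ 2 -> is_RInt_gen (gI 0 lam) (at_point 0) (Rbar_locally p_infty)
  (0 - J0 (sqrt (0 ^ 2 + lam ^ 2))).
Proof.
  intros Ha. apply (ftc _ (fun s => J0 (sqrt (s ^ 2 + lam ^ 2))) (gI 0 lam)).
  intros; apply dJ0; exact Ha. unfold gI; ctac. intros; reflexivity.
  apply V_comp. lra. apply V_J0.
Qed.
Lemma IK2 lam : 0 < lam ^ 2 -> is_RInt_gen (gK 2 lam) (at_point 0) (Rbar_locally p_infty)
  (0 - FK2 (lam ^ 2) (sqrt (0 ^ 2 + lam ^ 2))).
Proof.
  intros Ha. apply (ftc _ (fun s => FK2 (lam ^ 2) (sqrt (s ^ 2 + lam ^ 2))) (gK 2 lam)).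
  intros; apply dFK2; exact Ha. unfold gK; ctac. intros; reflexivity.
  apply V_comp. lra. apply V_FK2.
Qed.
Lemma II2 lam : 0 < lam ^ 2 -> is_RInt_gen (gI 2 lam) (at_point 0) (Rbar_locally p_infty)
  (0 - J2 (lam ^ 2) (sqrt (0 ^ 2 + lam ^ 2))).
Proof.
  intros Ha. apply (ftc _ (fun s => J2 (lam ^ 2) (sqrt (s ^ 2 + lam ^ 2))) (gI 2 lam)).
  intros; apply dJ2; exact Ha. unfold gI; ctac. intros; reflexivity.
  apply V_comp. lra. apply V_J2.
Qed.

Theorem mainTheorem4 :
  forall lam : R, K_n 0 lam = 8 / 3 * I_n 0 lam /\ K_n 2 lam = 8 * I_n 2 lam.
Proof.
  intros lam.
  change (K_n 0 lam) with (RInt_gen (gK 0 lam) (at_point 0) (Rbar_locally p_infty)).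
  change (K_n 2 lam) with (RInt_gen (gK 2 lam) (at_point 0) (Rbar_locally p_infty)).
  change (I_n 0 lam) with (RInt_gen (gI 0 lam) (at_point 0) (Rbar_locally p_infty)).
  change (I_n 2 lam) with (RInt_gen (gI 2 lam) (at_point 0) (Rbar_locally p_infty)).
  destruct (Req_dec lam 0) as [E | E].
  - subst lam. split.
    + rewrite (is_RInt_gen_unique _ _ IK0z), (is_RInt_gen_unique _ _ II0z).
      unfold FK0z. simpl. ring.
    + rewrite (is_RInt_gen_unique _ _ IK2z), (is_RInt_gen_unique _ _ II2z).
      unfold FK2z. simpl. ring.
  - assert (Ha : 0 < lam ^ 2) by (assert (lam * lam > 0) by (apply Rsqr_pos_lt; exact E); simpl; lra).
    assert (Hr0 : 0 < sqrt (0 ^ 2 + lam ^ 2)) by (apply sqrt_lt_R0; simpl; nra).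
    assert (Hr1 : sqrt (0 ^ 2 + lam ^ 2) ^ 2 = lam ^ 2).
    { rewrite <- Rsqr_pow2, Rsqr_sqrt by (simpl; nra). simpl; ring. }
    split.
    + rewrite (is_RInt_gen_unique _ _ (IK0 lam Ha)), (is_RInt_gen_unique _ _ (II0 lam Ha)).
      unfold FK0. rewrite H0_zero by assumption. ring.
    + rewrite (is_RInt_gen_unique _ _ (IK2 lam Ha)), (is_RInt_gen_unique _ _ (II2 lam Ha)).
      unfold FK2. rewrite H2_zero by assumption. ring.
Qed.
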